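(* Let $k\ge 2$ and let $\mathcal{T}_k$ be the graph with vertex set $\{a_1,\ldots,a_{k-1},b_1,\ldots,b_k,c_1,\ldots,c_{k-1},d_1,\ldots,d_{2k-3}\}$ whose edges are exactly: all pairs of distinct vertices in $\{a_1,\ldots,a_{k-1},b_1,\ldots,b_k\}$ (a clique $K_{2k-1}$); all pairs $b_ic_j$ ($1\le i\le k$, $1\le j\le k-1$); all pairs $c_id_j$ ($1\le i\le k-1$, $1\le j\le 2k-3$); the pairs $a_id_j$ for $1\le i\le k-1$ and $i\le j\le k-1$; and the pairs $b_id_j$ for $3\le i\le k$ and $k\le j\le k+i-3$. Then $\mathcal{T}_k$ is uniquely $k$-list colorable.
   Context: All graphs are finite, simple and undirected. A list assignment $L$ for a graph $G$ assigns to each vertex $v$ a set $L(v)$ of colors; an $L$-coloring is a proper vertex coloring $c$ of $G$ with $c(v)\in L(v)$ for every vertex $v$. A $k$-list assignment is a list assignment with $|L(v)|=k$ for all $v$. $G$ is uniquely $k$-list colorable (U$k$LC) if there exists a $k$-list assignment $L$ such that $G$ has exactly one $L$-coloring. *)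

(* Defs.v *)
From mathcomp Require Import all_boot.
Set Implicit Arguments. Unset Strict Implicit. Unset Printing Implicit Defensive.

(* A simple graph is given by a symmetric irreflexive relation adj on a finType V.
   Colors are natural numbers; a list L(v) is a duplicate-free sequence of colors. *)

Definition is_k_list_assignment (V : finType) (k : nat) (L : V -> seq nat) : Prop :=
  forall v, uniq (L v) /\ size (L v) = k.

Definition is_L_coloring (V : finType) (adj : rel V) (L : V -> seq nat) (c : V -> nat) : Prop :=
  (forall v, c v \in L v) /\ (forall u v, adj u v -> c u != c v).

Definition UkLC (V : finType) (adj : rel V) (k : nat) : Prop :=
  exists L : V -> seq nat,
    is_k_list_assignment k L /\
    exists c : V -> nat, is_L_coloring adj L c /\
      forall c' : V -> nat, is_L_coloring adj L c' -> forall v, c' v = c v.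

(* vertices: a_1..a_{k-1}, b_1..b_k, c_1..c_{k-1}, d_1..d_{2k-3};
   an ordinal i : 'I_n stands for the vertex with (1-based) index i+1 *)
Definition Tk_vert (k : nat) : finType :=
  ('I_(k.-1) + 'I_k + 'I_(k.-1) + 'I_(2 * k - 3))%type.

(* class (0 = a, 1 = b, 2 = c, 3 = d) and 1-based index *)
Definition Tk_info (k : nat) (x : Tk_vert k) : nat * nat :=
  match x with
  | inl (inl (inl i)) => (0, i.+1)
  | inl (inl (inr i)) => (1, i.+1)
  | inl (inr i) => (2, i.+1)
  | inr i => (3, i.+1)
  end.

(* directed description of the edge list in the paper *)
Definition Tk_edge0 (k : nat) (x y : nat * nat) : bool :=
  let: (cx, i) := x in let: (cy, j) := y in
  [|| (cx <= 1) && (cy <= 1)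
    , (cx == 1) && (cy == 2)
    , (cx == 2) && (cy == 3)
    , [&& cx == 0, cy == 3, i <= j & j <= k - 1]
    | [&& cx == 1, cy == 3, 3 <= i, k <= j & j <= k + i - 3]].

Definition Tk_adj (k : nat) : rel (Tk_vert k) :=
  fun u v => (u != v) && (Tk_edge0 k (Tk_info u) (Tk_info v) || Tk_edge0 k (Tk_info v) (Tk_info u)).

(* Main.v *)
Require Import Defs.
From mathcomp Require Import all_boot zify.
Set Implicit Arguments. Unset Strict Implicit.
Arguments iota : simpl never.

Definition av n (i : 'I_n.+1) : Tk_vert n.+2 := inl (inl (inl i)).
Definition bv n (i : 'I_n.+2) : Tk_vert n.+2 := inl (inl (inr i)).
Definition cv n (i : 'I_n.+1) : Tk_vert n.+2 := inl (inr i).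
Definition dv n (i : 'I_(2 * n.+2 - 3)) : Tk_vert n.+2 := inr i.

Definition col n (x : Tk_vert n.+2) : nat :=
  match x with
  | inl (inl (inl i)) => i
  | inl (inl (inr i)) => if i == n.+1 :> nat then n.+1 else n.+2 + i
  | inl (inr i) => n.+2 + n.+1 + i
  | inr i => if i < n.+1 then i.+1 else 0
  end.

Definition Lst n (x : Tk_vert n.+2) : seq nat :=
  match x with
  | inl (inl (inl i)) => iota 0 n.+2
  | inl (inl (inr i)) => if i == n.+1 :> nat then iota 0 n.+2 else (n.+2 + i) :: iota 0 n.+1
  | inl (inr i) => (n.+2 + n.+1 + i) :: iota n.+2 n.+1
  | inr i => col (inr i : Tk_vert n.+2) :: iota (n.+2 + n.+1) n.+1
  end.

Lemma col_proper n (u v : Tk_vert n.+2) : Tk_adj u v -> col u != col v.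
Proof.
move=> /andP[Hne He].
case: u Hne He => [[[i|i]|i]|i]; case: v => [[[j|j]|j]|j] => Hne He;
 have := ltn_ord i; have := ltn_ord j; rewrite /= in He *;
 try (have Hij : (i:nat) != j by apply: contraNneq Hne => /val_inj ->);
 rewrite ?subn1 /= in He; repeat (case: ifP => /= [/eqP ?|?]); move=> *; try lia; try exact Hij.


Qed.

Lemma adj_ab n (i : 'I_n.+1) (j : 'I_n.+2) : Tk_adj (av i) (bv j).
Proof. by []. Qed.
Lemma adj_aa n (i j : 'I_n.+1) : i != j -> Tk_adj (av i) (av j).
Proof. by move=> H; rewrite /Tk_adj /= andbT /av; apply: contra H => /eqP [->]. Qed.
Lemma adj_bb n (i j : 'I_n.+2) : i != j -> Tk_adj (bv i) (bv j).
Proof. by move=> H; rewrite /Tk_adj /= andbT /bv; apply: contra H => /eqP [->]. Qed.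
Lemma adj_bc n (i : 'I_n.+2) (j : 'I_n.+1) : Tk_adj (bv i) (cv j).
Proof. by []. Qed.
Lemma adj_cd n (i : 'I_n.+1) j : Tk_adj (cv i) (@dv n j).
Proof. by []. Qed.
Lemma adj_ad n (i : 'I_n.+1) (j : 'I_(2 * n.+2 - 3)) : (i <= j)%N -> (j < n.+1)%N -> Tk_adj (av i) (@dv n j).
Proof. move=> h1 h2; rewrite /Tk_adj /= subn1 /=; apply/orP; left; lia. Qed.

Lemma uniq_col n (c' : Tk_vert n.+2 -> nat) :
  (forall v, c' v \in Lst v) -> (forall u v, Tk_adj u v -> c' u != c' v) ->
  forall v, c' v = col v.
Proof.
move=> Hin Hadj.
have S1 : forall q, q < n.+1 -> (exists i : 'I_n.+1, c' (av i) = q) \/ c' (bv ord_max) = q.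
  move=> q hq.
  pose s := [seq c' (av i) | i <- enum 'I_n.+1] ++ [:: c' (bv ord_max)].
  have us : uniq s.
    rewrite cat_uniq /= andbT; apply/andP; split.
      rewrite map_inj_uniq ?enum_uniq // => i j E; apply/eqP; apply/negPn/negP => H.
      by move: (Hadj _ _ (adj_aa H)); rewrite E eqxx.
    rewrite orbF; apply/negP => /mapP [i _ E].
    by move: (Hadj _ _ (adj_ab i ord_max)); rewrite E eqxx.
  have sub : {subset s <= iota 0 n.+2}.
    move=> x; rewrite mem_cat => /orP [/mapP [i _ ->]|]; first exact: (Hin (av i)).
    rewrite inE => /eqP ->; have := Hin (bv ord_max); by rewrite /= eqxx.
  have sub2 : {subset iota 0 n.+2 <= s}.
    have hs : size (iota 0 n.+2) <= size s
      by rewrite size_iota size_cat size_map size_enum_ord addn1.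
    have [_ E] := uniq_min_size us sub hs.
    by move=> x; rewrite E.
  have hq' : q \in iota 0 n.+2 by rewrite mem_iota; lia.
  move: (sub2 q hq'); rewrite mem_cat => /orP [/mapP [i _ ->]|]; first by left; exists i.
  by rewrite inE => /eqP ->; right.
have S2 : forall i : 'I_n.+2, (i:nat) != n.+1 -> c' (bv i) = n.+2 + i.
  move=> i hi; have := Hin (bv i); rewrite /= (negbTE hi) inE => /orP [/eqP //|].
  rewrite mem_iota add0n => /andP [_ hq]; case: (S1 _ hq) => [[j Ej]|Ej].
    by have := Hadj _ _ (adj_ab j i); rewrite Ej eqxx.
  have ne : (ord_max : 'I_n.+2) != i by apply: contra hi => /eqP <-.
  by have := Hadj _ _ (adj_bb ne); rewrite Ej eqxx.
have S3 : forall j : 'I_n.+1, c' (cv j) = n.+2 + n.+1 + j.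
  move=> j; have := Hin (cv j); rewrite /= inE => /orP [/eqP //|].
  rewrite mem_iota => /andP [h1 h2].
  pose t : 'I_n.+2 := inord (c' (cv j) - n.+2).
  have ht : (t : nat) = c' (cv j) - n.+2 by rewrite inordK; lia.
  have htn : (t:nat) != n.+1 by rewrite ht; lia.
  have := Hadj _ _ (adj_bc t j); rewrite (S2 _ htn) ht => H; exfalso; lia.
have S4 : forall j : 'I_(2 * n.+2 - 3), c' (dv j) = col (dv j).
  move=> j; have := Hin (dv j); rewrite [Lst _]/= inE => /orP [/eqP //|].
  rewrite mem_iota => /andP [h1 h2].
  pose t : 'I_n.+1 := inord (c' (dv j) - (n.+2 + n.+1)).
  have ht : (t : nat) = c' (dv j) - (n.+2 + n.+1) by rewrite inordK; lia.
  have := Hadj _ _ (adj_cd t j); rewrite (S3 t) ht => H; exfalso; lia.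
have S5 : forall i (hi : i < n.+1), c' (av (Ordinal hi)) = i.
  elim/ltn_ind => i IH hi.
  have := Hin (av (Ordinal hi)); rewrite /= mem_iota add0n => /andP [_ hm].
  case: (ltngtP (c' (av (Ordinal hi))) i) => [lt|gt|//].
    have hm' : c' (av (Ordinal hi)) < n.+1 by lia.
    have Em := IH _ lt hm'.
    have ne : Ordinal hm' != Ordinal hi by rewrite -val_eqE /= neq_ltn lt.
    by have := Hadj _ _ (adj_aa ne); rewrite Em eqxx.
  have hd : (c' (av (Ordinal hi))) - 1 < 2 * n.+2 - 3 by lia.
  have h1 : i <= c' (av (Ordinal hi)) - 1 by lia.
  have h2 : c' (av (Ordinal hi)) - 1 < n.+1 by lia.
  have := Hadj _ _ (@adj_ad n (Ordinal hi) (Ordinal hd) h1 h2); rewrite S4 /=; case: ifP => Hif H; exfalso; move: Hif H h1 h2 gt; generalize (c' (av (Ordinal hi))); lia.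
have S6 : c' (bv ord_max) = n.+1.
  have := Hin (bv ord_max); rewrite /= eqxx mem_iota add0n => /andP [_ h].
  case: (ltngtP (c' (bv ord_max)) n.+1) => [lt|gt|//]; last by exfalso; lia.
  by have := Hadj _ _ (adj_ab (Ordinal lt) ord_max); rewrite S5 eqxx.
case=> [[[i|i]|i]|i].
- by case: i => i hi; exact: (S5 i hi).
- case: (eqVneq (i:nat) n.+1) => h.
    have -> : i = ord_max by apply: val_inj.
    by rewrite S6 /= eqxx.
  by rewrite (S2 _ h) /= (negbTE h).
- exact: S3.
- exact: S4.
Qed.

Theorem mainTheorem19 (k : nat) : 2 <= k -> UkLC (@Tk_adj k) k.
Proof.
case: k => [|[|n]] // _.
exists (@Lst n); split.
  case=> [[[i|i]|i]|i] /=; repeat case: ifP => ?;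
    rewrite /= ?mem_iota ?iota_uniq ?size_iota ?andbT //; split => //; lia.
exists (@col n); split.
  split; last exact: col_proper.
  case=> [[[i|i]|i]|i] /=.
  - by rewrite mem_iota; move: (ltn_ord i) => /= hi; lia.
  - case: ifP => [_|_]; last by rewrite inE eqxx.
    by rewrite mem_iota; lia.
  - by rewrite inE eqxx.
  - by rewrite inE eqxx.
move=> c' [Hin Hadj] v; exact: uniq_col.
Qed.
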